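(* Consider the planar Problem B with $w=e=(0,1)$ (see context), on a closed interval $D\subset(-\pi/2,\pi/2)$. If $(\rho,C_r,C_b,\varphi)$ solves it, then $0\in D$, $\varphi(0)=0$, $d_b(0)=d_r(0)$, and $\rho'(0)=0$.
   Context: Planar setting: $x(t)=(\sin t,\cos t)$ for $t\in D$, a closed interval in $(-\pi/2,\pi/2)$; $e=(0,1)$; refractive indices $n_b>n_r>1$, outside vacuum; $\Phi_\kappa(s)=s-\sqrt{\kappa^2-1+s^2}$. For positive $\rho\in C^2(D)$, the curve $\rho(t)x(t)$ has outer unit normal $\nu_\rho(t)=\dfrac{(\rho\sin t-\rho'\cos t,\ \rho'\sin t+\rho\cos t)}{\sqrt{\rho^2+\rho'^2}}$. For $c\in\{r,b\}$ and a constant $C_c$: $m_c(t)=\frac1{n_c}\big(x(t)-\Phi_{n_c}(x(t)\cdot\nu_\rho(t))\nu_\rho(t)\big)$, $d_c(t)=\dfrac{C_c-\rho(t)(1-\cos t)}{n_c-e\cdot m_c(t)}$, $f_c(t)=\rho(t)x(t)+d_c(t)m_c(t)$; the curve $f_c$ refracts the color-$c$ ray $m_c(t)$ at $f_c(t)$ into $e$ by Snell's law (index $n_c$ to $1$). A solution of Problem B on $D$: positive $\rho\in C^2(D)$, constants $C_r,C_b$ with $d_r,d_b>0$ and $f_r,f_b$ regular curves, and a $C^1$ map $\varphi:D\to D$ with $f_r(t)=f_b(\varphi(t))$ for all $t\in D$. *)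

(* Defs.v *)
From Stdlib Require Import Reals Lra.
Open Scope R_scope.

Definition inD (a b t : R) : Prop := a <= t <= b.

Definition deriv_on (a b : R) (f f' : R -> R) : Prop :=
  forall t, inD a b t ->
    limit1_in (fun s => (f s - f t) / (s - t)) (fun s => inD a b s /\ s <> t) (f' t) t.

Definition cont_on (a b : R) (f : R -> R) : Prop :=
  forall t, inD a b t -> limit1_in f (inD a b) (f t) t.

Definition Phi (k s : R) : R := s - sqrt (k ^ 2 - 1 + s ^ 2).

(* Outer unit normal nu_rho(t), given rho and rho1 = rho'. *)
Definition nrm (rho rho1 : R -> R) (t : R) : R := sqrt (rho t ^ 2 + rho1 t ^ 2).
Definition nu1 (rho rho1 : R -> R) (t : R) : R :=
  (rho t * sin t - rho1 t * cos t) / nrm rho rho1 t.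
Definition nu2 (rho rho1 : R -> R) (t : R) : R :=
  (rho1 t * sin t + rho t * cos t) / nrm rho rho1 t.

Definition xnu (rho rho1 : R -> R) (t : R) : R :=
  sin t * nu1 rho rho1 t + cos t * nu2 rho rho1 t.

Definition m1 (n : R) (rho rho1 : R -> R) (t : R) : R :=
  (sin t - Phi n (xnu rho rho1 t) * nu1 rho rho1 t) / n.
Definition m2 (n : R) (rho rho1 : R -> R) (t : R) : R :=
  (cos t - Phi n (xnu rho rho1 t) * nu2 rho rho1 t) / n.

(* d_c(t) = (C_c - rho(t)(1 - cos t)) / (n_c - e . m_c(t)), e = (0,1) *)
Definition dd (n C : R) (rho rho1 : R -> R) (t : R) : R :=
  (C - rho t * (1 - cos t)) / (n - m2 n rho rho1 t).

Definition f1 (n C : R) (rho rho1 : R -> R) (t : R) : R :=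
  rho t * sin t + dd n C rho rho1 t * m1 n rho rho1 t.
Definition f2 (n C : R) (rho rho1 : R -> R) (t : R) : R :=
  rho t * cos t + dd n C rho rho1 t * m2 n rho rho1 t.

Definition regular_on (a b : R) (g1 g2 : R -> R) : Prop :=
  exists h1 h2 : R -> R,
    deriv_on a b g1 h1 /\ deriv_on a b g2 h2 /\ cont_on a b h1 /\ cont_on a b h2 /\
    forall t, inD a b t -> (h1 t <> 0 \/ h2 t <> 0).

(* Solution of the planar Problem B (w = e = (0,1)) on D = [a,b].
   rho1, rho2 are the first and second derivatives of rho; phi1 that of phi. *)
Definition solves_B (nr nb a b : R) (rho rho1 rho2 : R -> R) (Cr Cb : R)
  (phi phi1 : R -> R) : Prop :=
  (forall t, inD a b t -> 0 < rho t) /\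
  deriv_on a b rho rho1 /\ deriv_on a b rho1 rho2 /\ cont_on a b rho2 /\
  (forall t, inD a b t -> 0 < dd nr Cr rho rho1 t) /\
  (forall t, inD a b t -> 0 < dd nb Cb rho rho1 t) /\
  regular_on a b (f1 nr Cr rho rho1) (f2 nr Cr rho rho1) /\
  regular_on a b (f1 nb Cb rho rho1) (f2 nb Cb rho rho1) /\
  (forall t, inD a b t -> inD a b (phi t)) /\
  deriv_on a b phi phi1 /\ cont_on a b phi1 /\
  (forall t, inD a b t ->
     f1 nr Cr rho rho1 t = f1 nb Cb rho rho1 (phi t) /\
     f2 nr Cr rho rho1 t = f2 nb Cb rho rho1 (phi t)).

(* Main.v *)
Require Import Defs.
From Stdlib Require Import Reals Lra Ranalysis5.
Open Scope R_scope.

Definition EE (D0 : R -> Prop) (t : R) := fun s => D0 s /\ s <> t.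
Definition HQ (D0 : R -> Prop) (g : R -> R) (t L : R) :=
  limit1_in (fun s => (g s - g t) / (s - t)) (EE D0 t) L t.

Lemma L_ext f g Dm l x : (forall s, Dm s -> f s = g s) ->
  limit1_in f Dm l x -> limit1_in g Dm l x.
Proof.
  unfold limit1_in, limit_in; simpl; intros He H eps Heps.
  destruct (H eps Heps) as [al [Hal H1]]. exists al; split; auto.
  intros s Hs. rewrite <- He by tauto. apply H1; auto.
Qed.

Lemma L_sub f D1 D2 l x : (forall s, D2 s -> D1 s) ->
  limit1_in f D1 l x -> limit1_in f D2 l x.
Proof.
  unfold limit1_in, limit_in; simpl; intros He H eps Heps.
  destruct (H eps Heps) as [al [Hal H1]]. exists al; split; auto.
  intros s [Hs1 Hs2]. apply H1; auto.
Qed.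

Lemma L_const c Dm x : limit1_in (fun _ => c) Dm c x.
Proof. exact (limit_free (fun _ => c) Dm x x). Qed.

Lemma L_eqv f Dm l l' x : l = l' -> limit1_in f Dm l x -> limit1_in f Dm l' x.
Proof. intros ->; auto. Qed.

Lemma HQ_cont D0 g t L : HQ D0 g t L -> limit1_in g (EE D0 t) (g t) t.
Proof.
  intro H.
  assert (H2 := limit_mul _ _ _ _ _ _ H (limit_minus _ _ _ _ _ _ (lim_x (EE D0 t) t) (L_const t _ t))).
  assert (H3 := limit_plus _ _ _ _ _ _ (L_const (g t) (EE D0 t) t) H2).
  eapply L_eqv; [| eapply L_ext; [| exact H3]].
  - ring.
  - intros s [_ Hs]. simpl. field. lra.
Qed.

Lemma HQ_add D0 f g t A B : HQ D0 f t A -> HQ D0 g t B ->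
  HQ D0 (fun s => f s + g s) t (A + B).
Proof.
  intros Hf Hg. eapply L_ext; [| exact (limit_plus _ _ _ _ _ _ Hf Hg)].
  intros s [_ Hs]. field. lra.
Qed.

Lemma HQ_sub D0 f g t A B : HQ D0 f t A -> HQ D0 g t B ->
  HQ D0 (fun s => f s - g s) t (A - B).
Proof.
  intros Hf Hg. eapply L_ext; [| exact (limit_minus _ _ _ _ _ _ Hf Hg)].
  intros s [_ Hs]. field. lra.
Qed.

Lemma HQ_const D0 c t : HQ D0 (fun _ => c) t 0.
Proof.
  eapply L_ext; [| exact (L_const 0 _ t)].
  intros s [_ Hs]. simpl. field. lra.
Qed.

Lemma HQ_mul D0 f g t A B : HQ D0 f t A -> HQ D0 g t B ->
  HQ D0 (fun s => f s * g s) t (A * g t + f t * B).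
Proof.
  intros Hf Hg.
  assert (H := limit_plus _ _ _ _ _ _ (limit_mul _ _ _ _ _ _ Hf (HQ_cont _ _ _ _ Hg))
                 (limit_mul _ _ _ _ _ _ (L_const (f t) _ t) Hg)).
  eapply L_ext; [| exact H].
  intros s [_ Hs]. simpl. field. lra.
Qed.

Lemma HQ_deriv D0 f t l : derivable_pt_lim f t l -> HQ D0 f t l.
Proof.
  intros H. unfold HQ, limit1_in, limit_in; simpl. intros eps Heps.
  destruct (H eps Heps) as [del Hd]. exists del; split; [apply cond_pos|].
  intros s [[_ Hs] Hd2]. unfold Rdist in *.
  assert (Hh : s - t <> 0) by lra.
  specialize (Hd (s - t) Hh Hd2). replace (t + (s - t)) with s in Hd by ring. exact Hd.
Qed.

Lemma HQ_comp D0 g phi t L c :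
  phi t = t -> (forall s, EE D0 t s -> D0 (phi s)) ->
  HQ D0 phi t c -> HQ D0 g t L -> HQ D0 (fun s => g (phi s)) t (L * c).
Proof.
  intros Hfix Hmap Hphi Hg.
  set (G := fun u => if Req_EM_T u t then L else (g u - g t) / (u - t)).
  assert (HG : limit1_in G D0 L t).
  { unfold limit1_in, limit_in in *; simpl in *. intros eps Heps.
    destruct (Hg eps Heps) as [al [Hal H1]]. exists al; split; auto.
    intros u [Hu Hd]. unfold G. destruct (Req_EM_T u t).
    - unfold Rdist; rewrite Rminus_diag, Rabs_R0; lra.
    - apply H1. split; auto. split; auto. }
  assert (Hc := HQ_cont _ _ _ _ Hphi). rewrite Hfix in Hc.
  assert (H2 := limit_comp _ _ _ _ _ _ _ Hc HG).
  assert (H3 : limit1_in (fun s => G (phi s)) (EE D0 t) L t).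
  { eapply L_sub; [| exact H2]. intros s Hs. split; auto. }
  assert (H4 := limit_mul _ _ _ _ _ _ H3 Hphi).
  eapply L_ext; [| exact H4].
  intros s [Hs1 Hs2]. simpl. unfold G. rewrite Hfix.
  destruct (Req_EM_T (phi s) t) as [e|n].
  - rewrite e. field_simplify; [reflexivity | lra| lra].
  - field. split; lra.
Qed.

Lemma HQ_eq D0 g g' t L : (forall s, D0 s -> g s = g' s) -> D0 t ->
  HQ D0 g t L -> HQ D0 g' t L.
Proof.
  intros He Ht H. eapply L_ext; [| exact H].
  intros s [Hs _]. simpl. rewrite !He; auto.
Qed.

Lemma nrm_facts rho rho1 t : 0 < rho t ->
  0 < nrm rho rho1 t /\ nrm rho rho1 t ^ 2 = rho t ^ 2 + rho1 t ^ 2.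
Proof.
  intros Hr. unfold nrm.
  assert (Hp : 0 < rho t ^ 2 + rho1 t ^ 2) by nra.
  split. apply sqrt_lt_R0; auto.
  rewrite <- Rsqr_pow2, Rsqr_sqrt by lra. ring.
Qed.

Lemma nu_unit rho rho1 t : 0 < rho t ->
  nu1 rho rho1 t ^ 2 + nu2 rho rho1 t ^ 2 = 1.
Proof.
  intros Hr. destruct (nrm_facts rho rho1 t Hr) as [H1 H2].
  unfold nu1, nu2. set (N := nrm rho rho1 t) in *.
  assert (Hsc := sin2_cos2 t). unfold Rsqr in Hsc.
  replace (((rho t * sin t - rho1 t * cos t) / N) ^ 2 +
           ((rho1 t * sin t + rho t * cos t) / N) ^ 2)
    with (((rho t * sin t - rho1 t * cos t) ^ 2 +
           (rho1 t * sin t + rho t * cos t) ^ 2) / N ^ 2) by (field; lra).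
  rewrite H2. field_simplify; [|nra].
  apply Rdiv_diag_eq; [nra|]. nra.
Qed.

Lemma xnu_val rho rho1 t : 0 < rho t -> xnu rho rho1 t = rho t / nrm rho rho1 t.
Proof.
  intros Hr. destruct (nrm_facts rho rho1 t Hr) as [H1 H2].
  unfold xnu, nu1, nu2. assert (Hsc := sin2_cos2 t). unfold Rsqr in Hsc.
  field_simplify; try lra. f_equal. nra.
Qed.

Lemma S_facts n x : 1 < n -> sqrt (n ^ 2 - 1 + x ^ 2) ^ 2 = n ^ 2 - 1 + x ^ 2.
Proof. intros Hn. rewrite <- Rsqr_pow2, Rsqr_sqrt by nra. ring. Qed.

Lemma m_unit n rho rho1 t : 1 < n -> 0 < rho t ->
  m1 n rho rho1 t ^ 2 + m2 n rho rho1 t ^ 2 = 1.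
Proof.
  intros Hn Hr. assert (Hu := nu_unit rho rho1 t Hr).
  unfold m1, m2, Phi. unfold xnu in *.
  set (v1 := nu1 rho rho1 t) in *. set (v2 := nu2 rho rho1 t) in *.
  set (X := sin t * v1 + cos t * v2).
  assert (HS := S_facts n X Hn). set (S := sqrt (n ^ 2 - 1 + X ^ 2)) in *.
  assert (Hsc := sin2_cos2 t). unfold Rsqr in Hsc.
  assert (E : (sin t - (X - S) * v1) ^ 2 + (cos t - (X - S) * v2) ^ 2 = n ^ 2).
  { replace ((sin t - (X - S) * v1) ^ 2 + (cos t - (X - S) * v2) ^ 2)
      with ((sin t ^ 2 + cos t ^ 2) - 2 * (X - S) * X + (X - S) ^ 2 * (v1 ^ 2 + v2 ^ 2))
      by (unfold X; ring).
    rewrite Hu. replace (sin t ^ 2 + cos t ^ 2) with 1 by nra.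
    replace (1 - 2 * (X - S) * X + (X - S) ^ 2 * 1) with (1 - X ^ 2 + S ^ 2) by ring.
    rewrite HS. ring. }
  replace (((sin t - (X - S) * v1) / n) ^ 2 + ((cos t - (X - S) * v2) / n) ^ 2)
    with (((sin t - (X - S) * v1) ^ 2 + (cos t - (X - S) * v2) ^ 2) / n ^ 2) by (field; lra).
  rewrite E. field. lra.
Qed.

Lemma dd_rel n C rho rho1 t : 0 < dd n C rho rho1 t ->
  n - m2 n rho rho1 t <> 0 /\
  dd n C rho rho1 t * (n - m2 n rho rho1 t) = C - rho t * (1 - cos t).
Proof.
  intros H. unfold dd in *.
  destruct (Req_dec (n - m2 n rho rho1 t) 0) as [e|ne].
  - rewrite e in H. unfold Rdiv in H. rewrite Rinv_0, Rmult_0_r in H. lra.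
  - split; auto. field. auto.
Qed.

Lemma ident n C rho rho1 t : 1 < n -> 0 < rho t -> 0 < dd n C rho rho1 t ->
  (f2 n C rho rho1 t - rho t + C) * (f2 n C rho rho1 t - rho t + C) =
  n * n * ((f1 n C rho rho1 t - rho t * sin t) * (f1 n C rho rho1 t - rho t * sin t) +
           (f2 n C rho rho1 t - rho t * cos t) * (f2 n C rho rho1 t - rho t * cos t)).
Proof.
  intros Hn Hr Hd. destruct (dd_rel _ _ _ _ _ Hd) as [_ Hrel].
  assert (Hu := m_unit n rho rho1 t Hn Hr).
  unfold f1, f2. set (d := dd n C rho rho1 t) in *.
  set (a1 := m1 n rho rho1 t) in *. set (a2 := m2 n rho rho1 t) in *.
  replace (rho t * cos t + d * a2 - rho t + C) with (n * d) by nra.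
  replace (rho t * sin t + d * a1 - rho t * sin t) with (d * a1) by ring.
  replace (rho t * cos t + d * a2 - rho t * cos t) with (d * a2) by ring.
  replace ((d * a1) * (d * a1) + (d * a2) * (d * a2)) with (d * d * (a1 ^ 2 + a2 ^ 2)) by ring.
  rewrite Hu. ring.
Qed.

Lemma cross_dot n rho rho1 t : 1 < n -> 0 < rho t ->
  m1 n rho rho1 t * nu2 rho rho1 t - m2 n rho rho1 t * nu1 rho rho1 t
    = rho1 t / (nrm rho rho1 t * n) /\
  m1 n rho rho1 t * nu1 rho rho1 t + m2 n rho rho1 t * nu2 rho rho1 t
    = sqrt (n ^ 2 - 1 + xnu rho rho1 t ^ 2) / n.
Proof.
  intros Hn Hr. assert (Hu := nu_unit rho rho1 t Hr).
  destruct (nrm_facts rho rho1 t Hr) as [H1 H2].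
  assert (Hsc := sin2_cos2 t). unfold Rsqr in Hsc.
  split.
  - unfold m1, m2, nu1, nu2. field_simplify; try lra.
    replace (sin t ^ 2 * rho1 t * nrm rho rho1 t + rho1 t * cos t ^ 2 * nrm rho rho1 t) with (rho1 t * nrm rho rho1 t * (sin t * sin t + cos t * cos t)) by ring; rewrite Hsc. field. lra.
  - unfold m1, m2, Phi. unfold xnu in *.
    set (v1 := nu1 rho rho1 t) in *. set (v2 := nu2 rho rho1 t) in *.
    set (S := sqrt (n ^ 2 - 1 + (sin t * v1 + cos t * v2) ^ 2)).
    transitivity (((sin t * v1 + cos t * v2) * (1 - (v1 ^ 2 + v2 ^ 2)) + (v1 ^ 2 + v2 ^ 2) * S) / n).
    + field. lra.
    + rewrite Hu. field. lra.
Qed.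

Lemma m_at_zero n rho rho1 t : 1 < n -> 0 < rho t -> rho1 t = 0 ->
  m1 n rho rho1 t = sin t /\ m2 n rho rho1 t = cos t.
Proof.
  intros Hn Hr H0.
  assert (HN : nrm rho rho1 t = rho t).
  { unfold nrm. rewrite H0. replace (rho t ^ 2 + 0 ^ 2) with (rho t * rho t) by ring.
    apply sqrt_square. lra. }
  assert (Hx : xnu rho rho1 t = 1).
  { rewrite xnu_val, HN by auto. field. lra. }
  assert (HP : Phi n 1 = 1 - n).
  { unfold Phi. replace (n ^ 2 - 1 + 1 ^ 2) with (n * n) by ring.
    rewrite sqrt_square by lra. ring. }
  unfold m1, m2, nu1, nu2. rewrite Hx, HP, HN, H0. split; field; lra.
Qed.

Definition clamp a b s := Rmax a (Rmin b s).

Lemma clamp_lip a b s x : a <= b -> Rabs (clamp a b s - clamp a b x) <= Rabs (s - x).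
Proof.
  intros Hab. unfold clamp, Rmax, Rmin.
  repeat destruct Rle_dec; unfold Rabs; repeat destruct Rcase_abs; lra.
Qed.

Lemma clamp_in a b s : a <= b -> inD a b (clamp a b s).
Proof. intros. unfold inD, clamp, Rmax, Rmin. repeat destruct Rle_dec; lra. Qed.

Lemma clamp_id a b s : inD a b s -> clamp a b s = s.
Proof. unfold inD, clamp, Rmax, Rmin. intros. repeat destruct Rle_dec; lra. Qed.

Lemma fixed_point a b phi : a < b ->
  (forall t, inD a b t -> inD a b (phi t)) ->
  (forall t, inD a b t -> limit1_in phi (inD a b) (phi t) t) ->
  exists tau, inD a b tau /\ phi tau = tau.
Proof.
  intros Hab Hmap Hc.
  set (f := fun s => clamp a b s - phi (clamp a b s)).
  assert (Hcont : forall x, a <= x <= b -> continuity_pt f x).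
  { intros x Hx. unfold f. apply continuity_pt_minus.
    - unfold continuity_pt, continue_in, limit1_in, limit_in; simpl. intros eps He.
      exists eps. split; auto. intros s [_ Hs]. unfold Rdist in *.
      eapply Rle_lt_trans; [apply clamp_lip; lra| auto].
    - unfold continuity_pt, continue_in, limit1_in, limit_in; simpl. intros eps He.
      destruct (Hc x Hx eps He) as [al [Hal H]]. exists al. split; auto.
      intros s [_ Hs]. rewrite (clamp_id a b x Hx). apply H. split.
      + apply clamp_in; lra.
      + simpl. unfold Rdist in *. rewrite <- (clamp_id a b x Hx).
        eapply Rle_lt_trans; [apply clamp_lip; lra| auto]. }
  assert (Ha : inD a b a) by (unfold inD; lra).
  assert (Hb : inD a b b) by (unfold inD; lra).
  assert (Fa : f a = a - phi a) by (unfold f; rewrite clamp_id; auto).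
  assert (Fb : f b = b - phi b) by (unfold f; rewrite clamp_id; auto).
  pose proof (Hmap a Ha). pose proof (Hmap b Hb). unfold inD in *.
  destruct (Req_dec (phi a) a) as [e|n1]. { exists a; split; auto; lra. }
  destruct (Req_dec (phi b) b) as [e|n2]. { exists b; split; auto; lra. }
  destruct (IVT_interv f a b Hcont Hab) as [z [Hz Hfz]]; try lra.
  exists z. split; auto. unfold f in Hfz. rewrite clamp_id in Hfz by (unfold inD; auto). lra.
Qed.

Lemma adh a b t : a < b -> inD a b t -> adhDa (fun s => inD a b s /\ s <> t) t.
Proof.
  intros Hab Ht alp Ha. unfold inD in *.
  destruct (Rlt_dec t b).
  - exists (t + Rmin (alp/2) (b - t)).
    assert (0 < Rmin (alp/2) (b-t)) by (apply Rmin_pos; lra).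
    pose proof (Rmin_l (alp/2) (b-t)); pose proof (Rmin_r (alp/2) (b-t)).
    unfold Rdist. replace (t + Rmin (alp / 2) (b - t) - t) with (Rmin (alp/2) (b-t)) by ring.
    rewrite Rabs_right by lra. repeat split; lra.
  - exists (t - Rmin (alp/2) (b - a)).
    assert (0 < Rmin (alp/2) (b-a)) by (apply Rmin_pos; lra).
    pose proof (Rmin_l (alp/2) (b-a)); pose proof (Rmin_r (alp/2) (b-a)).
    unfold Rdist. replace (t - Rmin (alp / 2) (b - a) - t) with (- Rmin (alp/2) (b-a)) by ring.
    rewrite Rabs_Ropp, Rabs_right by lra. repeat split; lra.
Qed.

Ltac hq1 := match goal with
 | |- HQ ?D (fun _ => ?c) ?t _ => apply (HQ_const D c t)
 | |- HQ ?D (fun s => @?f s * @?g s) ?t _ => eapply (HQ_mul D f g)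
 | |- HQ ?D (fun s => @?f s + @?g s) ?t _ => eapply (HQ_add D f g)
 | |- HQ ?D (fun s => @?f s - @?g s) ?t _ => eapply (HQ_sub D f g)
 | |- HQ ?D (fun s => ?h (?p s)) ?t _ => eapply (HQ_comp D h p); [assumption|assumption| |]
 | |- HQ ?D _ ?t _ => eassumption
 end.
Ltac hq := repeat hq1.

Theorem lemma5p4 (nr nb a b : R) (rho rho1 rho2 : R -> R) (Cr Cb : R)
  (phi phi1 : R -> R) :
  1 < nr -> nr < nb ->
  - (PI / 2) < a -> a < b -> b < PI / 2 ->
  solves_B nr nb a b rho rho1 rho2 Cr Cb phi phi1 ->
  inD a b 0 /\ phi 0 = 0 /\
  dd nb Cb rho rho1 0 = dd nr Cr rho rho1 0 /\ rho1 0 = 0.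
Proof.
  intros Hnr Hnb Ha Hab Hb HB.
  destruct HB as [Hpos [Hdr [Hdr1 [Hcr2 [Hdpr [Hdpb [Hregr [Hregb [Hmap [Hdphi [Hcphi1 Hf]]]]]]]]]]].
  assert (Hcphi : forall t, inD a b t -> limit1_in phi (inD a b) (phi t) t).
  { intros t Ht. assert (H := HQ_cont _ _ _ _ (Hdphi t Ht)).
    unfold limit1_in, limit_in in *; simpl in *. intros eps He.
    destruct (H eps He) as [al [Hal H1]]. exists al; split; auto.
    intros s [Hs Hd]. destruct (Req_dec s t) as [->|ne].
    - unfold Rdist. rewrite Rminus_diag, Rabs_R0. lra.
    - apply H1. split; auto. split; auto. }
  destruct (fixed_point a b phi Hab Hmap Hcphi) as [tau [Htau Hfix]].
  assert (Hr := Hpos tau Htau).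
  assert (Hdr0 := Hdpr tau Htau). assert (Hdb0 := Hdpb tau Htau).
  destruct (Hf tau Htau) as [E1 E2]. rewrite Hfix in E1, E2.
  assert (Hz : rho1 tau = 0).
  { destruct (cross_dot nr rho rho1 tau Hnr Hr) as [Cr1 Dr1].
    destruct (cross_dot nb rho rho1 tau ltac:(lra) Hr) as [Cb1 Db1].
    destruct (nrm_facts rho rho1 tau Hr) as [HN _].
    unfold f1, f2 in E1, E2.
    set (dr := dd nr Cr rho rho1 tau) in *. set (db := dd nb Cb rho rho1 tau) in *.
    set (v1 := nu1 rho rho1 tau) in *. set (v2 := nu2 rho rho1 tau) in *.
    assert (F1 : dr * m1 nr rho rho1 tau = db * m1 nb rho rho1 tau) by lra.
    assert (F2 : dr * m2 nr rho rho1 tau = db * m2 nb rho rho1 tau) by lra.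
    assert (G1 : dr * (rho1 tau / (nrm rho rho1 tau * nr)) = db * (rho1 tau / (nrm rho rho1 tau * nb))).
    { rewrite <- Cr1, <- Cb1.
      replace (dr * (m1 nr rho rho1 tau * v2 - m2 nr rho rho1 tau * v1)) with
        ((dr * m1 nr rho rho1 tau) * v2 - (dr * m2 nr rho rho1 tau) * v1) by ring.
      rewrite F1, F2. ring. }
    assert (G2 : dr * (sqrt (nr ^ 2 - 1 + xnu rho rho1 tau ^ 2) / nr) =
                 db * (sqrt (nb ^ 2 - 1 + xnu rho rho1 tau ^ 2) / nb)).
    { rewrite <- Dr1, <- Db1.
      replace (dr * (m1 nr rho rho1 tau * v1 + m2 nr rho rho1 tau * v2)) with
        ((dr * m1 nr rho rho1 tau) * v1 + (dr * m2 nr rho rho1 tau) * v2) by ring.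
      rewrite F1, F2. ring. }
    destruct (Req_dec (rho1 tau) 0) as [e|ne]; auto. exfalso.
    set (X := xnu rho rho1 tau) in *.
    assert (SR := S_facts nr X Hnr). assert (SB := S_facts nb X ltac:(lra)).
    set (Sr := sqrt (nr ^ 2 - 1 + X ^ 2)) in *. set (Sb := sqrt (nb ^ 2 - 1 + X ^ 2)) in *.
    assert (Sr0 : 0 <= Sr) by apply sqrt_pos. assert (Sb0 : 0 <= Sb) by apply sqrt_pos.
    set (N := nrm rho rho1 tau) in *.
    assert (K : dr / nr = db / nb).
    { assert (G1' : (dr / nr - db / nb) * (rho1 tau / N) = 0).
      { replace ((dr / nr - db / nb) * (rho1 tau / N)) with
          (dr * (rho1 tau / (N * nr)) - db * (rho1 tau / (N * nb))) by (field; lra).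
        lra. }
      apply Rmult_integral in G1'. destruct G1' as [G|G]; [lra|].
      exfalso. unfold Rdiv in G. apply Rmult_integral in G. destruct G as [G|G]; [auto|].
      apply Rinv_neq_0_compat in G; auto; lra. }
    assert (K2 : (dr / nr) * (Sr - Sb) = 0).
    { replace ((dr / nr) * (Sr - Sb)) with (dr * (Sr / nr) - (dr / nr) * Sb) by (field; lra).
      rewrite K. replace (db / nb * Sb) with (db * (Sb / nb)) by (field; lra). lra. }
    apply Rmult_integral in K2. destruct K2 as [K2|K2].
    - assert (0 < dr / nr) by (apply Rdiv_lt_0_compat; lra). lra.
    - assert (Sr = Sb) by lra. assert (Sr ^ 2 = Sb ^ 2) by (rewrite H; auto). nra. }
  destruct (m_at_zero nr rho rho1 tau Hnr Hr Hz) as [Mr1 Mr2].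
  destruct (m_at_zero nb rho rho1 tau ltac:(lra) Hr Hz) as [Mb1 Mb2].
  assert (Hcos : 0 < cos tau) by (unfold inD in Htau; apply cos_gt_0; lra).
  assert (Hdeq : dd nb Cb rho rho1 tau = dd nr Cr rho rho1 tau).
  { unfold f2 in E2. rewrite Mr2, Mb2 in E2.
    apply (Rmult_eq_reg_r (cos tau)); lra. }
  destruct (dd_rel _ _ _ _ _ Hdr0) as [_ Rr]. destruct (dd_rel _ _ _ _ _ Hdb0) as [_ Rb].
  rewrite Mr2 in Rr. rewrite Mb2 in Rb.
  destruct Hregr as [h1 [h2 [Hh1 [Hh2 [_ [_ Hnz]]]]]].
  assert (HP1 := Hh1 tau Htau). assert (HP2 := Hh2 tau Htau).
  change (HQ (inD a b) (f1 nr Cr rho rho1) tau (h1 tau)) in HP1.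
  change (HQ (inD a b) (f2 nr Cr rho rho1) tau (h2 tau)) in HP2.
  assert (HR : HQ (inD a b) rho tau (rho1 tau)) by exact (Hdr tau Htau).
  assert (HPh : HQ (inD a b) phi tau (phi1 tau)) by exact (Hdphi tau Htau).
  assert (HS : HQ (inD a b) sin tau (cos tau)) by exact (HQ_deriv _ _ _ _ (derivable_pt_lim_sin tau)).
  assert (HC : HQ (inD a b) cos tau (- sin tau)) by exact (HQ_deriv _ _ _ _ (derivable_pt_lim_cos tau)).
  assert (Hm : forall s, EE (inD a b) tau s -> inD a b (phi s)) by (intros s [Hs _]; auto).
  assert (Had := adh a b tau Hab Htau).
  eassert (LR : HQ (inD a b) (fun s => (f2 nr Cr rho rho1 s - rho s + Cr) * (f2 nr Cr rho rho1 s - rho s + Cr)) tau _)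
    by hq.
  eassert (RR : HQ (inD a b) (fun s => nr * nr * ((f1 nr Cr rho rho1 s - rho s * sin s) * (f1 nr Cr rho rho1 s - rho s * sin s) +
           (f2 nr Cr rho rho1 s - rho s * cos s) * (f2 nr Cr rho rho1 s - rho s * cos s))) tau _)
    by hq.
  eapply HQ_eq in LR; [| intros s Hs; apply ident; auto | exact Htau].
  pose proof (single_limit _ _ _ _ _ Had LR RR) as EqR. clear LR RR.
  eassert (LB : HQ (inD a b) (fun s => (f2 nr Cr rho rho1 s - rho (phi s) + Cb) * (f2 nr Cr rho rho1 s - rho (phi s) + Cb)) tau _)
    by hq.
  eassert (RB : HQ (inD a b) (fun s => nb * nb * ((f1 nr Cr rho rho1 s - rho (phi s) * sin (phi s)) * (f1 nr Cr rho rho1 s - rho (phi s) * sin (phi s)) +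
           (f2 nr Cr rho rho1 s - rho (phi s) * cos (phi s)) * (f2 nr Cr rho rho1 s - rho (phi s) * cos (phi s)))) tau _)
    by hq.
  assert (IdB : forall s, inD a b s ->
    (f2 nr Cr rho rho1 s - rho (phi s) + Cb) * (f2 nr Cr rho rho1 s - rho (phi s) + Cb) =
    nb * nb * ((f1 nr Cr rho rho1 s - rho (phi s) * sin (phi s)) * (f1 nr Cr rho rho1 s - rho (phi s) * sin (phi s)) +
           (f2 nr Cr rho rho1 s - rho (phi s) * cos (phi s)) * (f2 nr Cr rho rho1 s - rho (phi s) * cos (phi s)))).
  { intros s Hs. destruct (Hf s Hs) as [-> ->]. apply ident; auto; lra. }
  eapply HQ_eq in LB; [| exact IdB | exact Htau].
  pose proof (single_limit _ _ _ _ _ Had LB RB) as EqB. clear LB RB.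
  rewrite Hfix in EqB.
  unfold f1, f2 in EqR, EqB. rewrite Mr1, Mr2, Hz in EqR. rewrite Mr1, Mr2, Hz in EqB.
  rewrite Hdeq in Rb.
  set (d := dd nr Cr rho rho1 tau) in *.
  set (H1 := h1 tau) in *. set (H2 := h2 tau) in *.
  assert (HCr : Cr = d * (nr - cos tau) + rho tau * (1 - cos tau)) by lra.
  assert (HCb : Cb = d * (nb - cos tau) + rho tau * (1 - cos tau)) by lra.
  rewrite HCr in EqR. rewrite HCb in EqB.
  assert (A1 : 2 * nr * d * (H2 - nr * (sin tau * H1 + cos tau * H2)) = 0) by nra.
  assert (B1 : 2 * nb * d * (H2 - nb * (sin tau * H1 + cos tau * H2)) = 0) by nra.
  assert (Hd0 : 0 < d) by exact Hdr0.
  assert (A2 : H2 = nr * (sin tau * H1 + cos tau * H2)).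
  { apply Rmult_integral in A1. destruct A1 as [A1|A1]; [|lra].
    exfalso. assert (0 < 2 * nr * d) by (apply Rmult_lt_0_compat; lra). lra. }
  assert (B2 : H2 = nb * (sin tau * H1 + cos tau * H2)).
  { apply Rmult_integral in B1. destruct B1 as [B1|B1]; [|lra].
    exfalso. assert (0 < 2 * nb * d) by (apply Rmult_lt_0_compat; lra). lra. }
  assert (K0 : sin tau * H1 + cos tau * H2 = 0).
  { assert ((nb - nr) * (sin tau * H1 + cos tau * H2) = 0) by lra.
    apply Rmult_integral in H. destruct H; lra. }
  assert (H20 : H2 = 0) by nra.
  assert (H10 : H1 <> 0) by (destruct (Hnz tau Htau); auto; contradiction).
  assert (S0 : sin tau = 0).
  { rewrite H20 in K0. apply (Rmult_eq_reg_r H1); auto. lra. }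
  assert (T0 : tau = 0).
  { unfold inD in Htau. destruct (Rtotal_order tau 0) as [l|[e|g]]; auto.
    - assert (sin tau < 0) by (apply sin_lt_0_var; lra). lra.
    - assert (0 < sin tau) by (apply sin_gt_0; lra). lra. }
  subst tau. repeat split; auto; unfold inD in Htau; lra.
Qed.
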